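(* The set of outer deterministic multirelations $X\leftrightarrow\mathcal{P}Y$, ordered by $\sqsubseteq_\downarrow$ (which on this set equals $\sqsubseteq_\uparrow$ and $\sqsubseteq_\updownarrow$), is a lattice in which the supremum of $R$ and $S$ is $R\Cup S$ and the infimum is $R\Cap S$.
   Context: $R\Cup S=\{(a,A\cup B)\mid (a,A)\in R,(a,B)\in S\}$, $R\Cap S=\{(a,A\cap B)\mid (a,A)\in R,(a,B)\in S\}$. $R^{\uparrow}=\{(a,A)\mid\exists B.(a,B)\in R\wedge B\subseteq A\}$, $R^{\downarrow}=\{(a,A)\mid\exists B.(a,B)\in R\wedge A\subseteq B\}$; $R\sqsubseteq_\uparrow S\iff S\subseteq R^{\uparrow}$; $R\sqsubseteq_\downarrow S\iff R\subseteq S^{\downarrow}$; $R\sqsubseteq_\updownarrow S\iff R\sqsubseteq_\downarrow S\wedge R\sqsubseteq_\uparrow S$. A multirelation $R$ is outer deterministic if for each $a\in X$ there is exactly one $B$ with $(a,B)\in R$. *)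

(* Defs.v *)
Set Implicit Arguments.

Definition pset (Y : Type) := Y -> Prop.
Definition psubset {Y : Type} (A B : pset Y) : Prop := forall y, A y -> B y.
Definition punion {Y : Type} (A B : pset Y) : pset Y := fun y => A y \/ B y.
Definition pinter {Y : Type} (A B : pset Y) : pset Y := fun y => A y /\ B y.

(* A multirelation X <-> P Y: a relation between X and subsets of Y. *)
Definition mrel (X Y : Type) := X -> pset Y -> Prop.

Definition mincl {X Y : Type} (R S : mrel X Y) : Prop := forall a A, R a A -> S a A.

Definition mcup {X Y : Type} (R S : mrel X Y) : mrel X Y :=
  fun a C => exists A B, R a A /\ S a B /\ C = punion A B.
Definition mcap {X Y : Type} (R S : mrel X Y) : mrel X Y :=
  fun a C => exists A B, R a A /\ S a B /\ C = pinter A B.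

Definition mup {X Y : Type} (R : mrel X Y) : mrel X Y :=
  fun a A => exists B, R a B /\ psubset B A.
Definition mdown {X Y : Type} (R : mrel X Y) : mrel X Y :=
  fun a A => exists B, R a B /\ psubset A B.

Definition le_up {X Y : Type} (R S : mrel X Y) : Prop := mincl S (mup R).
Definition le_down {X Y : Type} (R S : mrel X Y) : Prop := mincl R (mdown S).
Definition le_updown {X Y : Type} (R S : mrel X Y) : Prop := le_down R S /\ le_up R S.

Definition outer_det {X Y : Type} (R : mrel X Y) : Prop :=
  forall a : X, exists! B : pset Y, R a B.

(* Main.v *)
Require Import Defs.

From Stdlib Require Import FunctionalExtensionality PropExtensionality.

Lemma od_uniq {X Y : Type} {R : mrel X Y} : outer_det R ->
  forall {a A B}, R a A -> R a B -> A = B.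
Proof. intros H a A B HA HB. destruct (H a) as [C [HC U]].
  rewrite <- (U A HA), <- (U B HB). reflexivity. Qed.

Lemma le_down_iff {X Y : Type} {R S : mrel X Y} : outer_det R -> outer_det S ->
  (le_down R S <-> forall a A B, R a A -> S a B -> psubset A B).
Proof. intros HR HS; split.
- intros H a A B HA HB. destruct (H a A HA) as [B' [HB' Hs]].
  rewrite (od_uniq HS HB' HB) in Hs. exact Hs.
- intros H a A HA. destruct (HS a) as [B [HB _]]. exists B. split; auto. eauto.
Qed.

Lemma le_up_iff {X Y : Type} {R S : mrel X Y} : outer_det R -> outer_det S ->
  (le_up R S <-> forall a A B, R a A -> S a B -> psubset A B).
Proof. intros HR HS; split.
- intros H a A B HA HB. destruct (H a B HB) as [A' [HA' Hs]].
  rewrite (od_uniq HR HA' HA) in Hs. exact Hs.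
- intros H a B HB. destruct (HR a) as [A [HA _]]. exists A. split; auto. eauto.
Qed.

Lemma pset_ext {Y : Type} (A B : pset Y) : psubset A B -> psubset B A -> A = B.
Proof. intros H1 H2. extensionality y. apply propositional_extensionality; split; auto. Qed.

Lemma cup_od {X Y : Type} {R S : mrel X Y} : outer_det R -> outer_det S ->
  forall {a A B}, R a A -> S a B -> forall C, mcup R S a C <-> C = punion A B.
Proof. intros HR HS a A B HA HB C; split.
- intros [A' [B' [H1 [H2 H3]]]]. rewrite (od_uniq HR H1 HA), (od_uniq HS H2 HB) in H3. exact H3.
- intros ->. exists A, B. auto.
Qed.

Lemma cap_od {X Y : Type} {R S : mrel X Y} : outer_det R -> outer_det S ->
  forall {a A B}, R a A -> S a B -> forall C, mcap R S a C <-> C = pinter A B.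
Proof. intros HR HS a A B HA HB C; split.
- intros [A' [B' [H1 [H2 H3]]]]. rewrite (od_uniq HR H1 HA), (od_uniq HS H2 HB) in H3. exact H3.
- intros ->. exists A, B. auto.
Qed.

Lemma cup_det {X Y : Type} {R S : mrel X Y} : outer_det R -> outer_det S -> outer_det (mcup R S).
Proof. intros HR HS a. destruct (HR a) as [A [HA _]]. destruct (HS a) as [B [HB _]].
  exists (punion A B). split. apply (cup_od HR HS HA HB); reflexivity.
  intros C HC. symmetry. apply (cup_od HR HS HA HB); exact HC. Qed.

Lemma cap_det {X Y : Type} {R S : mrel X Y} : outer_det R -> outer_det S -> outer_det (mcap R S).
Proof. intros HR HS a. destruct (HR a) as [A [HA _]]. destruct (HS a) as [B [HB _]].
  exists (pinter A B). split. apply (cap_od HR HS HA HB); reflexivity.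
  intros C HC. symmetry. apply (cap_od HR HS HA HB); exact HC. Qed.

Theorem proposition5p10 (X Y : Type) :
  (* on outer deterministic multirelations the three orders coincide *)
  (forall R S : mrel X Y, outer_det R -> outer_det S ->
     (le_down R S <-> le_up R S) /\ (le_down R S <-> le_updown R S)) /\
  (* le_down is a partial order on outer deterministic multirelations *)
  (forall R : mrel X Y, outer_det R -> le_down R R) /\
  (forall R S T : mrel X Y, outer_det R -> outer_det S -> outer_det T ->
     le_down R S -> le_down S T -> le_down R T) /\
  (forall R S : mrel X Y, outer_det R -> outer_det S ->
     le_down R S -> le_down S R -> R = S) /\
  (* R ⋓ S is the supremum *)
  (forall R S : mrel X Y, outer_det R -> outer_det S ->
     outer_det (mcup R S) /\ le_down R (mcup R S) /\ le_down S (mcup R S) /\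
     (forall T : mrel X Y, outer_det T -> le_down R T -> le_down S T ->
        le_down (mcup R S) T)) /\
  (* R ⋒ S is the infimum *)
  (forall R S : mrel X Y, outer_det R -> outer_det S ->
     outer_det (mcap R S) /\ le_down (mcap R S) R /\ le_down (mcap R S) S /\
     (forall T : mrel X Y, outer_det T -> le_down T R -> le_down T S ->
        le_down T (mcap R S))).
Proof.
split; [|split; [|split; [|split; [|split]]]].
- intros R S HR HS. rewrite (le_down_iff HR HS), (le_up_iff HR HS).
  unfold le_updown. rewrite (le_down_iff HR HS), (le_up_iff HR HS). tauto.
- intros R HR. apply (le_down_iff HR HR). intros a A B HA HB.
  rewrite (od_uniq HR HA HB). intros y h; exact h.
- intros R S T HR HS HT. rewrite (le_down_iff HR HS), (le_down_iff HS HT), (le_down_iff HR HT).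
  intros H1 H2 a A C HA HC. destruct (HS a) as [B [HB _]]. intros y h. eapply H2; eauto. eapply H1; eauto.
- intros R S HR HS. rewrite (le_down_iff HR HS), (le_down_iff HS HR). intros H1 H2.
  extensionality a. extensionality C. apply propositional_extensionality.
  destruct (HR a) as [A [HA _]]. destruct (HS a) as [B [HB _]].
  assert (E : A = B) by (apply pset_ext; eauto).
  subst B. split; intro H.
  + rewrite (od_uniq HR H HA); exact HB.
  + rewrite (od_uniq HS H HB); exact HA.
- intros R S HR HS. pose proof (cup_det HR HS) as HU.
  split; [exact HU|]. split; [|split].
  + apply (le_down_iff HR HU). intros a A C HA HC. destruct (HS a) as [B [HB _]].
    apply (cup_od HR HS HA HB) in HC. subst C. intros y h; left; exact h.
  + apply (le_down_iff HS HU). intros a B C HB HC. destruct (HR a) as [A [HA _]].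
    apply (cup_od HR HS HA HB) in HC. subst C. intros y h; right; exact h.
  + intros T HT. rewrite (le_down_iff HR HT), (le_down_iff HS HT), (le_down_iff HU HT).
    intros H1 H2 a C D HC HD. destruct (HR a) as [A [HA _]]. destruct (HS a) as [B [HB _]].
    apply (cup_od HR HS HA HB) in HC. subst C. intros y [h|h]; [exact (H1 a A D HA HD y h)|exact (H2 a B D HB HD y h)].
- intros R S HR HS. pose proof (cap_det HR HS) as HU.
  split; [exact HU|]. split; [|split].
  + apply (le_down_iff HU HR). intros a C A HC HA. destruct (HS a) as [B [HB _]].
    apply (cap_od HR HS HA HB) in HC. subst C. intros y h; apply h.
  + apply (le_down_iff HU HS). intros a C B HC HB. destruct (HR a) as [A [HA _]].
    apply (cap_od HR HS HA HB) in HC. subst C. intros y h; apply h.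
  + intros T HT. rewrite (le_down_iff HT HR), (le_down_iff HT HS), (le_down_iff HT HU).
    intros H1 H2 a D C HD HC. destruct (HR a) as [A [HA _]]. destruct (HS a) as [B [HB _]].
    apply (cap_od HR HS HA HB) in HC. subst C. intros y h; split; [exact (H1 a D A HD HA y h)|exact (H2 a D B HD HB y h)].
Qed.
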